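(* Let $(TN,\mu_0)$ be a perpetual $T$-system with regeneration cluster $cl$. Then for any two markings $\mu_1,\mu_2$ reachable in $(TN,\mu_0)$, $$en(TN,\mu_1)=en(TN,\mu_2)\implies\mu_1=\mu_2.$$
   Context: A net consists of finite disjoint sets of places and transitions and directed edges between places and transitions (no place–place or transition–transition edges); nets are weakly connected. ${}^\bullet x$, $x^\bullet$ are pre-set and post-set of a node. A $T$-net is a net in which every place has exactly one pre-transition and exactly one post-transition; a $T$-system is a $T$-net with a marking (map from places to $\mathbb{N}$). A transition is enabled if all its pre-places are marked; firing removes one token from each pre-place and adds one to each post-place. $en(TN,\mu)$ is the set of transitions enabled at $\mu$; reachable markings arise from $\mu_0$ by firing finite sequences of successively enabled transitions. The cluster of a node $x$ is the smallest subnet containing $x$ containing $p^\bullet$ for each of its places $p$ and ${}^\bullet t$ for each of its transitions $t$; $\mu_{cl}$ is the marking equal to $1$ on the places of $cl$ and $0$ elsewhere. $(TN,\mu_0)$ is perpetual with regeneration cluster $cl$ if it is live and bounded and $\mu_{cl}$ is a home marking (reachable from every reachable marking). *)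

(* Defs.v *)
From mathcomp Require Import all_boot.
Set Implicit Arguments. Unset Strict Implicit. Unset Printing Implicit Defensive.

Record net := Net {
  place : finType;
  trans : finType;
  pt : place -> trans -> bool;
  tp : trans -> place -> bool
}.

Section NetDefs.
Variable N : net.

Definition node : finType := (place N + trans N)%type.

Definition arc (x y : node) : bool :=
  match x, y with
  | inl p, inr t => pt p t
  | inr t, inl p => tp t p
  | _, _ => false
  end.

Definition weakly_connected : Prop :=
  forall x y : node, connect (fun a b => arc a b || arc b a) x y.

Definition preset (x : node) : {set node} := [set y | arc y x].
Definition postset (x : node) : {set node} := [set y | arc x y].

Definition is_T_net : Prop :=
  forall p : place N,
    #|[set t | tp t p]| = 1 /\ #|[set t | pt p t]| = 1.

Definition marking := {ffun place N -> nat}.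

Definition enabled (m : marking) (t : trans N) : bool :=
  [forall p, pt p t ==> (0 < m p)].

Definition en (m : marking) : {set trans N} := [set t | enabled m t].

Definition fire (m : marking) (t : trans N) : marking :=
  [ffun p => m p - pt p t + tp t p].

Inductive reachable (m : marking) : marking -> Prop :=
  | reach_refl : reachable m m
  | reach_step m' t : reachable m m' -> enabled m' t -> reachable m (fire m' t).

Definition live (m0 : marking) : Prop :=
  forall m, reachable m0 m -> forall t, exists2 m', reachable m m' & enabled m' t.

Definition bounded (m0 : marking) : Prop :=
  exists k, forall m, reachable m0 m -> forall p, m p <= k.

Definition cluster_closed (S : {set node}) : bool :=
  [forall p : place N, (inl p \in S) ==> (postset (inl p) \subset S)] &&
  [forall t : trans N, (inr t \in S) ==> (preset (inr t) \subset S)].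

Definition cluster (x : node) : {set node} :=
  \bigcap_(S | cluster_closed S && (x \in S)) S.

Definition mu_cl (cl : {set node}) : marking :=
  [ffun p => (inl p \in cl) : nat].

Definition home_marking (m0 m : marking) : Prop :=
  forall m', reachable m0 m' -> reachable m' m.

Definition perpetual (m0 : marking) (cl : {set node}) : Prop :=
  [/\ live m0, bounded m0 & home_marking m0 (mu_cl cl)].

End NetDefs.

(* Main.v *)
Require Import Defs.
From mathcomp Require Import all_boot zify.

Lemma reach_trans (N : net) (a b c : marking N) :
  reachable a b -> reachable b c -> reachable a c.
Proof. move=> Hab; elim=> [|m t _ IH He]; first by []. exact: reach_step. Qed.

Lemma dead (N : net) (P : pred (place N)) (m m' : marking N) :
  (forall p, P p -> forall t, tp t p -> exists2 q, P q & pt q t) ->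
  reachable m m' -> (forall q, P q -> m q = 0) -> forall q, P q -> m' q = 0.
Proof.
move=> cl; elim=> [|m'' t _ IH en] H0 // q Pq.
rewrite ffunE IH //.
case Htp: (tp t q); last by case: (pt q t).
have [q' Pq' ptq'] := cl q Pq t Htp.
by move/forallP: en => /(_ q'); rewrite ptq' IH.
Qed.

Lemma post_uniq (N : net) : is_T_net N ->
  forall p (t1 t2 : trans N), pt p t1 -> pt p t2 -> t1 = t2.
Proof.
move=> HT p t1 t2 h1 h2; have [_ /eqP/cards1P [x Hx]] := HT p.
have : t1 \in [set t | pt p t] by rewrite inE.
have : t2 \in [set t | pt p t] by rewrite inE.
by rewrite Hx !inE => /eqP -> /eqP ->.
Qed.

Lemma post_ex (N : net) : is_T_net N -> forall p : place N, exists t, pt p t.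
Proof.
move=> HT p; have [_ /eqP/cards1P [x Hx]] := HT p.
exists x; suff: x \in [set t | pt p t] by rewrite inE.
by rewrite Hx inE.
Qed.

Lemma pre_ex (N : net) : is_T_net N -> forall p : place N, exists t, tp t p.
Proof.
move=> HT p; have [/eqP/cards1P [x Hx] _] := HT p.
exists x; suff: x \in [set t | tp t p] by rewrite inE.
by rewrite Hx inE.
Qed.

Lemma no_source (N : net) (m0 : marking N) (p0 : place N) :
  weakly_connected N -> bounded m0 -> forall t : trans N, exists q, pt q t.
Proof.
move=> HW [k Hk] t.
case: (boolP [exists q, pt q t]) => [/existsP//|/existsPn Hn].
have : exists q, tp t q.
  move/connectP: (HW (inr t) (inl p0)) => [[|y s] /=]; first by [].
  case/andP; case: y => [q|u] /=; last by [].
  by rewrite (negbTE (Hn q)) orbF => h _ _; exists q.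
case=> q Hq.
have H : forall n, exists m, reachable m0 m /\ n <= m q.
  elim=> [|n [m [Hr Hn']]]; first by exists m0; split=> //; constructor.
  exists (fire m t); split.
    apply: reach_step => //; apply/forallP => p; by rewrite (negbTE (Hn p)).
  by rewrite ffunE (negbTE (Hn q)) Hq; lia.
have [m [Hr Hm]] := H k.+1.
by have := Hk m Hr q; lia.
Qed.
Arguments post_uniq {N} _ {p t1 t2}.
Arguments post_ex {N} _ p.
Arguments pre_ex {N} _ p.
Arguments dead {N P m m'}.
Arguments reach_trans {N a b c}.

Lemma mu_cluster (N : net) (x : node N) : is_T_net N ->
  exists ts : trans N, forall q, mu_cl (cluster x) q = pt q ts.
Proof.
move=> HT.
have [ts Hx] : exists ts : trans N, x = inr ts \/ exists2 p, x = inl p & pt p ts.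
  case: x => [p|t]; last by exists t; left.
  by have [t Ht] := post_ex HT p; exists t; right; exists p.
exists ts => q; rewrite ffunE.
set S0 : {set node N} := [set y | match y with inl q => pt q ts | inr t => t == ts end].
have cS0 : cluster_closed S0.
  apply/andP; split; apply/forallP => z; apply/implyP; rewrite inE => Hz;
    apply/subsetP => y; rewrite inE; case: y => [q'|u] //=; rewrite inE.
  - by move=> h; apply/eqP; exact: (post_uniq HT h Hz).
  - by move/eqP: Hz => ->.
have xS0 : x \in S0 by case: Hx => [->|[p -> Hp]]; rewrite inE.
case Hq: (pt q ts).
  suff -> : inl q \in cluster x by [].
  apply/bigcapP => S /andP [cS xS].
  have tsS : inr ts \in S.
    case: Hx => [Ex|[p Ep Hp]]; first by rewrite -Ex.
    case/andP: cS => cP _; move/forallP: cP => /(_ p) /implyP; rewrite -Ep => /(_ xS) /subsetP H.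
    by apply: H; rewrite inE Ep.
  case/andP: cS => _ /forallP /(_ ts) /implyP /(_ tsS) /subsetP H; apply: H.
  by rewrite inE.
suff -> : inl q \in cluster x = false by [].
apply/negbTE/negP => Hc.
have : inl q \in S0 by move/subsetP: (bigcap_inf S0 (F := id) (P := fun S => cluster_closed S && (x \in S)) (introT andP (conj cS0 xS0))); apply.
by rewrite inE Hq.
Qed.

Lemma fwd (N : net) (m0 mu : marking N) (ts : trans N) :
  live m0 -> reachable m0 mu -> (forall t : trans N, exists q, pt q t) ->
  (forall q, mu q = pt q ts) ->
  (forall p (t1 t2 : trans N), pt p t1 -> pt p t2 -> t1 = t2) ->
  forall P : pred (trans N), P ts ->
  (forall a p b, tp a p -> pt p b -> P a -> P b) -> forall u, P u.
Proof.
move=> Hl Hmu ns Hm uniq P Pts cl u; apply/negPn/negP => nPu.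
have [q0 hq0] := ns u.
pose D := [pred q | [exists b, pt q b && ~~ P b]].
have Dcl : forall p, D p -> forall t, tp t p -> exists2 q, D q & pt q t.
  move=> p /existsP [b /andP [pb nb]] t tpt.
  have nt : ~~ P t by apply/negP => Pt; move/negP: nb; apply; exact: cl pb Pt.
  have [q' hq'] := ns t; exists q' => //; apply/existsP; exists t; by rewrite hq'.
have D0 : forall q, D q -> mu q = 0.
  move=> q /existsP [b /andP [pb nb]]; rewrite Hm.
  case Hq: (pt q ts) => //; have E := uniq _ _ _ pb Hq.
  by rewrite E Pts in nb.
have [m' Hr He] := Hl mu Hmu u.
have Dq0 : D q0 by apply/existsP; exists u; rewrite hq0.
have := dead Dcl Hr D0 q0 Dq0.
by move/forallP: He => /(_ q0); rewrite hq0 /= => h; lia.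
Qed.

Lemma proj (N : net) (P : pred (trans N)) :
  (forall p (t1 t2 : trans N), pt p t1 -> pt p t2 -> t1 = t2) ->
  (forall a p b, tp a p -> pt p b -> P b -> P a) ->
  forall m m' : marking N, reachable m m' ->
  exists m'', [/\ reachable m m'',
     (forall p b, pt p b -> P b -> m'' p = m' p) &
     (forall p, (forall b, pt p b -> ~~ P b) -> m p <= m'' p)].
Proof.
move=> uniq cl m m'; elim=> [|m1 t _ [m'' [Hr Heq Hge]] en].
  by exists m; split=> //; constructor.
case Pt: (P t).
  exists (fire m'' t); split.
  - apply: reach_step => //; apply/forallP => p; apply/implyP => ppt.
    by rewrite (Heq p t ppt Pt); move/forallP: en => /(_ p); rewrite ppt.
  - by move=> p b pb Pb; rewrite !ffunE (Heq p b pb Pb).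
  - move=> p Hp; rewrite ffunE.
    case Ht: (pt p t); first by have := Hp t Ht; rewrite Pt.
    by have := Hge p Hp; lia.
exists m''; split=> //.
  move=> p b pb Pb; rewrite ffunE (Heq p b pb Pb).
  case H1: (pt p t); first by rewrite (uniq _ _ _ H1 pb) Pb in Pt.
  case H2: (tp t p); first by rewrite (cl _ _ _ H2 pb Pb) in Pt.
  by rewrite subn0 addn0.
Qed.

Lemma bwd (N : net) (m0 : marking N) (ts : trans N) :
  live m0 -> bounded m0 ->
  (forall p (t1 t2 : trans N), pt p t1 -> pt p t2 -> t1 = t2) ->
  (forall P : pred (trans N), P ts ->
     (forall a p b, tp a p -> pt p b -> P a -> P b) -> forall u, P u) ->
  forall P : pred (trans N), P ts ->
  (forall a p b, tp a p -> pt p b -> P b -> P a) -> forall u, P u.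
Proof.
move=> Hl [k Hk] uniq Hf P Pts cl u; apply/negPn/negP => nPu.
case: (boolP [exists a, exists c, exists b, [&& tp a c, pt c b, P a & ~~ P b]]); last first.
  move/existsPn => H; move/negP: nPu; apply; apply: Hf => // a p b h1 h2 Pa.
  apply/negPn/negP => nb; move: (H a) => /existsPn /(_ p) /existsPn /(_ b).
  by rewrite h1 h2 Pa nb.
case/existsP => a /existsP [c /existsP [b /and4P [tac pcb Pa nPb]]].
have NV : forall b', pt c b' -> ~~ P b' by move=> b' h; rewrite (uniq _ _ _ h pcb).
have H : forall n, exists m, reachable m0 m /\ n <= m c.
  elim=> [|n [m [Hr Hn]]]; first by exists m0; split=> //; constructor.
  have [m1 Hr1 He1] := Hl m Hr a.
  have [m'' [Hr'' Heq Hge]] := @proj N P uniq cl _ _ Hr1.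
  exists (fire m'' a); split.
    apply: reach_trans Hr _; apply: reach_step => //.
    apply/forallP => p; apply/implyP => ppa.
    by rewrite (Heq p a ppa Pa); move/forallP: He1 => /(_ p); rewrite ppa.
  rewrite ffunE tac.
  case Hca: (pt c a); first by have := NV a Hca; rewrite Pa.
  by have := Hge c NV; lia.
have [m [Hr Hm]] := H k.+1.
by have := Hk m Hr c; lia.
Qed.

Lemma pre_uniq (N : net) : is_T_net N ->
  forall p (t1 t2 : trans N), tp t1 p -> tp t2 p -> t1 = t2.
Proof.
move=> HT p t1 t2 h1 h2; have [/eqP/cards1P [x Hx] _] := HT p.
have : t1 \in [set t | tp t p] by rewrite inE.
have : t2 \in [set t | tp t p] by rewrite inE.
by rewrite Hx !inE => /eqP -> /eqP ->.
Qed.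

Lemma meq (N : net) (m m' : marking N) : reachable m m' ->
  exists s : trans N -> nat, forall p,
    m' p + \sum_t pt p t * s t = m p + \sum_t tp t p * s t.
Proof.
elim=> [|m1 t _ [s Hs] en]; first by exists (fun _ => 0) => p; rewrite !big1 // => i _; rewrite muln0.
exists (fun u => s u + (u == t)) => p.
have E : forall (f : trans N -> bool), \sum_u f u * (s u + (u == t)) = \sum_u f u * s u + f t.
  move=> f; under eq_bigr do rewrite mulnDr.
  rewrite big_split /=; congr (_ + _).
  rewrite (bigD1 t) //= eqxx muln1 big1 ?addn0 // => i /negbTE ->.
  by rewrite muln0.
rewrite !E ffunE.
have := Hs p; move/forallP: en => /(_ p).
case: (pt p t) => /=; case: (tp t p) => /=; lia.
Qed.

Lemma sum1 (N : net) (f : trans N -> bool) (b : trans N) (s : trans N -> nat) :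
  (forall t, f t -> t = b) -> f b -> \sum_t f t * s t = s b.
Proof.
move=> U fb; rewrite (bigD1 b) //= fb mul1n big1 ?addn0 // => i ne.
case Hi: (f i); last by rewrite mul0n.
by rewrite (U i Hi) eqxx in ne.
Qed.
Arguments meq {N m m'}.

Lemma get_s (N : net) (m mu : marking N) (ts : trans N) :
  is_T_net N -> reachable m mu -> (forall q, mu q = pt q ts) ->
  (forall P : pred (trans N), P ts ->
     (forall a p b, tp a p -> pt p b -> P a -> P b) -> forall u, P u) ->
  (forall P : pred (trans N), P ts ->
     (forall a p b, tp a p -> pt p b -> P b -> P a) -> forall u, P u) ->
  exists s : trans N -> nat,
    (forall a p b, tp a p -> pt p b -> pt p ts + s b = m p + s a) /\
    (forall v, s ts <= s v <= s ts + 1).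
Proof.
move=> HT Hr Hmu fw bw.
have [s Hs] := meq Hr.
have E : forall a p b, tp a p -> pt p b -> pt p ts + s b = m p + s a.
  move=> a p b ha hb; have := Hs p.
  rewrite Hmu (@sum1 N (pt p) b s (fun t h => @post_uniq N HT p t b h hb) hb).
  by rewrite (@sum1 N (fun t => tp t p) a s (fun t h => @pre_uniq N HT p t a h ha) ha).
exists s; split=> // v; apply/andP; split.
  apply: (fw [pred v | s ts <= s v]) => //= a p b ha hb h.
  have := E a p b ha hb.
  case: (eqVneq b ts) => [-> //|ne].
  case Hp: (pt p ts); first by rewrite (@post_uniq N HT p _ _ hb Hp) eqxx in ne.
  lia.
apply: (bw [pred v | s v <= s ts + 1]); first by rewrite /= leq_addr.
move=> a p b ha hb /= h.
have := E a p b ha hb.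
case Hp: (pt p ts); last lia.
rewrite (@post_uniq N HT p _ _ hb Hp); lia.
Qed.

Lemma key (N : net) (m0 m1 m2 : marking N) (ts : trans N) (s1 s2 : trans N -> nat) :
  live m0 -> reachable m0 m1 ->
  (forall t : trans N, exists q, pt q t) ->
  (forall p (t1 t2 : trans N), pt p t1 -> pt p t2 -> t1 = t2) ->
  (forall p : place N, exists a, tp a p) ->
  (forall a p b, tp a p -> pt p b -> pt p ts + s1 b = m1 p + s1 a) ->
  (forall a p b, tp a p -> pt p b -> pt p ts + s2 b = m2 p + s2 a) ->
  (forall v, s2 ts <= s2 v) ->
  en m1 = en m2 ->
  forall u, ~ (s1 u = s1 ts + 1 /\ s2 u = s2 ts).
Proof.
move=> Hl R1 ns uniq pex E1 E2 B2 Hen u [Hu1 Hu2].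
pose W := [pred v | (s1 v == s1 ts + 1) && (s2 v == s2 ts)].
case: (boolP [exists v, W v && enabled m1 v]).
  case/existsP => v /andP [/andP [/eqP w1 /eqP w2] env].
  have : v \in en m2 by rewrite -Hen inE.
  rewrite inE => env2.
  have nv : v != ts by apply/eqP => e; rewrite e in w1; lia.
  have [q hq] := ns v; have [a ha] := pex q.
  have := E2 a q v ha hq.
  case Hq: (pt q ts); first by rewrite (uniq _ _ _ hq Hq) eqxx in nv.
  move/forallP: env2 => /(_ q); rewrite hq /= => pos.
  have := B2 a; lia.
move/existsPn => none.
pose D := [pred q | [exists b, pt q b && W b] && (m1 q == 0)].
have Dcl : forall p, D p -> forall t, tp t p -> exists2 q, D q & pt q t.
  move=> p /andP [/existsP [b /andP [pb Wb]] /eqP m0p] t tpt.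
  move: (Wb) => /andP [/eqP b1 /eqP b2].
  have nb : b != ts by apply/eqP => e; rewrite e in b1; lia.
  have Hp : pt p ts = false.
    by case Hp: (pt p ts) => //; rewrite (uniq _ _ _ pb Hp) eqxx in nb.
  have e1 := E1 t p b tpt pb; have e2 := E2 t p b tpt pb; have := B2 t.
  rewrite Hp m0p in e1; rewrite Hp in e2 => bt.
  have Wt : W t by apply/andP; split; apply/eqP; lia.
  have := none t; rewrite Wt /= => /forallPn [q'].
  rewrite negb_imply => /andP [hq' hpos].
  exists q' => //; apply/andP; split.
    by apply/existsP; exists t; rewrite hq'; exact: Wt.
  by rewrite lt0n negbK in hpos.
have D0 : forall q, D q -> m1 q = 0 by move=> q /andP [_ /eqP].
have Wu : W u by apply/andP; split; apply/eqP.
have := none u; rewrite Wu /= => /forallPn [q0].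
rewrite negb_imply => /andP [hq0 hpos].
have Dq0 : D q0.
  apply/andP; split; first by apply/existsP; exists u; rewrite hq0; exact: Wu.
  by rewrite lt0n negbK in hpos.
have [m' Hr He] := Hl m1 R1 u.
have := dead Dcl Hr D0 q0 Dq0.
by move/forallP: He => /(_ q0); rewrite hq0 /= => h; lia.
Qed.

Theorem proposition5p2 (N : net) (m0 : marking N) (x : node N) :
  weakly_connected N -> is_T_net N ->
  perpetual m0 (cluster x) ->
  forall m1 m2 : marking N,
    reachable m0 m1 -> reachable m0 m2 ->
    en m1 = en m2 -> m1 = m2.
Proof.
move=> HW HT [Hl Hb Hh] m1 m2 R1 R2 Hen; apply/ffunP => p0.
have ns := no_source _ _ p0 HW Hb.
have uniq := @post_uniq N HT.
have [ts Hmu] := mu_cluster _ x HT.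
have Hmu0 : reachable m0 (mu_cl (cluster x)) := Hh m0 (reach_refl _).
have fw := fwd _ _ _ _ Hl Hmu0 ns Hmu uniq.
have bw := bwd _ _ _ Hl Hb uniq fw.
have [s1 [E1 B1]] := get_s _ _ _ _ HT (Hh m1 R1) Hmu fw bw.
have [s2 [E2 B2]] := get_s _ _ _ _ HT (Hh m2 R2) Hmu fw bw.
have pex := pre_ex HT.
have K1 := key _ _ _ _ _ _ _ Hl R1 ns uniq pex E1 E2 (fun v => proj1 (andP (B2 v))) Hen.
have K2 := key _ _ _ _ _ _ _ Hl R2 ns uniq pex E2 E1 (fun v => proj1 (andP (B1 v))) (esym Hen).
have D : forall v, s1 v + s2 ts = s2 v + s1 ts.
  move=> v; have := K1 v; have := K2 v; move: (B1 v) (B2 v) => /andP [h1 h2] /andP [h3 h4]; lia.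
have [a ha] := pex p0; have [b hb] := post_ex HT p0.
have := E1 a p0 b ha hb; have := E2 a p0 b ha hb; have := D a; have := D b; lia.
Qed.
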